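(* Let $G=(V,E)$ be a connected undirected unweighted graph on $N$ vertices and let $r>1$. For every mutant set $S$ with $\emptyset\ne S\ne V$ and every edge $\{u,v\}\in E$ with $u\in S$, $v\notin S$, $$\psi_{u,v}^{\delta=1/2}(S):=\frac12\cdot\frac{1}{w(S)}\left(\frac{r}{\deg(u)}-\frac{1}{\deg(v)}\right)+\frac12\cdot\frac1N\left(\frac{r}{w_v(S)}-\frac{1}{w_u(S)}\right)\ \ge\ \frac{r-1}{rN^3},$$ and moreover $\mathsf{AT}_r^{\delta=1/2}(G)\le\frac{r}{r-1}\cdot N^4$.
   Context: Mixed $\delta$-updating on $G$: each vertex holds a mutant (fitness $r$) or wild-type (fitness $1$); $f_S(x)\in\{1,r\}$ is the fitness at $x$ when $S$ is the mutant set. At each step, with probability $\delta$ a death-Birth step: choose $v$ uniformly to die, choose a neighbor $u$ of $v$ with probability proportional to $f_S(u)$, $u$ copies its type onto $v$; with probability $1-\delta$ a Birth-death step: choose $u$ with probability proportional to $f_S(u)$ among all vertices, choose a uniformly random neighbor $v$ of $u$, $u$ copies its type onto $v$. Notation: $w(S)=\sum_{x\in V}f_S(x)=N+(r-1)|S|$, and $w_x(S)=\sum_{y:\{x,y\}\in E}f_S(y)$ is the total fitness of the neighbors of $x$. $\mathsf{AT}_r^\delta(G,S_0)$ is the expected number of steps until the population is all mutant or all wild-type starting from $S_0$, and $\mathsf{AT}_r^\delta(G)=\max_{S_0\subseteq V}\mathsf{AT}_r^\delta(G,S_0)$. *)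

(* Defs.v *)
From HB Require Import structures.
From mathcomp Require Import all_boot all_order all_algebra.
From mathcomp Require Import all_classical all_reals all_analysis.
Set Implicit Arguments. Unset Strict Implicit. Unset Printing Implicit Defensive.
Import Order.TTheory GRing.Theory Num.Theory.
Local Open Scope ring_scope.

Section Moran.
Variables (R : realType) (T : finType) (e : rel T).

Definition NN : R := #|T|%:R.

Definition nbrs (x : T) : {set T} := [set y | e x y].
Definition deg (x : T) : R := #|nbrs x|%:R.

Definition fit (r : R) (S : {set T}) (x : T) : R := if x \in S then r else 1.
Definition wtot (r : R) (S : {set T}) : R := \sum_(x : T) fit r S x.
Definition wnb (r : R) (S : {set T}) (x : T) : R := \sum_(y in nbrs x) fit r S y.

Definition psi_half (r : R) (S : {set T}) (u v : T) : R :=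
  2^-1 * ((wtot r S)^-1 * (r / deg u - 1 / deg v))
  + 2^-1 * (NN^-1 * (r / wnb r S v - 1 / wnb r S u)).

(* state after u copies its type onto v *)
Definition upd (S : {set T}) (u v : T) : {set T} :=
  if u \in S then v |: S else S :\ v.

Definition trans (delta r : R) (S S' : {set T}) : R :=
  delta * (\sum_(v : T) \sum_(u in nbrs v)
              NN^-1 * (fit r S u / wnb r S v) * (upd S u v == S')%:R)
  + (1 - delta) * (\sum_(u : T) \sum_(v in nbrs u)
              (fit r S u / wtot r S) * (deg u)^-1 * (upd S u v == S')%:R).

Fixpoint distr (delta r : R) (t : nat) (S0 S : {set T}) : R :=
  match t with
  | 0 => (S0 == S)%:R
  | t'.+1 => \sum_(S1 : {set T}) distr delta r t' S0 S1 * trans delta r S1 S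
  end.

Definition absorbed (S : {set T}) : bool := (S == finset.set0) || (S == [set: T]).

Definition surv (delta r : R) (S0 : {set T}) (t : nat) : R :=
  \sum_(S : {set T} | ~~ absorbed S) distr delta r t S0 S.

(* AT_r^delta(G, S0) = E[absorption time] = sum_{t>=0} P(T > t), in \bar R *)
Definition AT (delta r : R) (S0 : {set T}) : \bar R :=
  (\sum_(0 <= t <oo) (surv delta r S0 t)%:E)%E.

End Moran.

Definition simple_connected_graph (T : finType) (e : rel T) : Prop :=
  symmetric e /\ irreflexive e /\ (forall x y : T, connect e x y).

(* Main.v *)
Require Import Defs.
From mathcomp Require Import all_boot all_order all_algebra.
From mathcomp Require Import all_classical all_reals all_analysis.
From mathcomp Require Import ring lra.
Import Order.TTheory GRing.Theory Num.Theory.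
Local Open Scope ring_scope.

Lemma boundary_edge (T : finType) (e : rel T) (S : {set T}) :
  (forall x y : T, connect e x y) -> S != finset.set0 -> S != [set: T] ->
  exists u v, [/\ e u v, u \in S & v \notin S].
Proof.
move=> conn /finset.set0Pn [x xS] /eqP SnT.
have [y yS] : exists y, y \notin S.
  apply/existsP; apply: contraT; rewrite negb_exists => /forallP H.
  exfalso; apply: SnT; apply/setP => z; rewrite !inE; by move/negPn: (H z).
move: (conn x y) => /connectP [p pth yl].
elim: p x xS pth yl => [|z p IH] x xS /=; first by move=> _ ?; subst y; rewrite xS in yS.
move=> /andP [exz pth] yl.
case zS: (z \in S); first exact: IH zS pth yl.
by exists x, z; rewrite exz xS zS.
Qed.

Lemma fit_ge1 (R : realType) (T : finType) (r : R) S (x : T) : 1 < r -> 1 <= fit r S x <= r.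
Proof. by move=> r1; rewrite /fit; case: ifP => _; lra. Qed.

Lemma fit_gt0 (R : realType) (T : finType) (r : R) S (x : T) : 1 < r -> 0 < fit r S x.
Proof. by move=> r1; rewrite /fit; case: ifP => _; lra. Qed.

Lemma div_le_div (R : realFieldType) (a b c d : R) :
  0 < a -> 0 < b -> c * b <= d * a -> c / a <= d / b.
Proof. by move=> a0 b0 h; rewrite ler_pdivlMr // mulrAC ler_pdivrMr. Qed.

Lemma sum_one (R : realType) (T : finType) : \sum_(x : T) (1 : R) = NN R T.
Proof. by rewrite sumr_const /NN; congr (_%:R); apply: eq_card. Qed.
Lemma key_ineq (R : realFieldType) (r x y n iw P Q : R) :
  1 < r -> n <= x -> n <= y -> 0 < n -> 2 * n <= 1 -> n <= iw * r -> iw <= n ->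
  y <= P -> Q <= x ->
  (r - 1) * n ^+ 3 <= r * (2^-1 * (iw * (r * x - y)) + 2^-1 * (n * (P - Q))).
Proof.
move=> r1 nx ny n0 n2 nr iwn yP Qx.
have h1 : 0 <= r * n * (P - y) by apply: mulr_ge0; [nra|lra].
have h2 : 0 <= r * n * (x - Q) by apply: mulr_ge0; [nra|lra].
have h3 : 0 <= (r - 1) * n * n * (1 - 2 * n) by apply: mulr_ge0; [apply: mulr_ge0; nra|lra].
have h4 : 0 <= (r - 1) * n * (y - n) by apply: mulr_ge0; [nra|lra].
have h5 : 0 <= r * (r - 1) * n * x by apply: mulr_ge0; nra.
case: (lerP 0 (r * x - y)) => ha.
  have h6 : 0 <= (iw * r - n) * (r * x - y) by apply: mulr_ge0; lra.
  nra.
have h6 : 0 <= r * (n - iw) * (y - r * x) by apply: mulr_ge0; [nra|lra].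
have h7 : 0 <= (r - 1) * n * n * (r - 1) by apply: mulr_ge0; nra.
have h8 : 0 <= r * (r - 1) * n * (x - n) by apply: mulr_ge0; nra.
nra.
Qed.

Lemma deg_gt0 (R : realType) (T : finType) (e : rel T) u v :
  e u v -> 0 < deg R e u.
Proof. by move=> euv; rewrite /deg ltr0n; apply/card_gt0P; exists v; rewrite inE. Qed.

Lemma deg_leN (R : realType) (T : finType) (e : rel T) u : deg R e u <= NN R T.
Proof. by rewrite /deg /NN ler_nat max_card. Qed.

Lemma wtot_ge (R : realType) (T : finType) (r : R) (S : {set T}) : 1 < r ->
  NN R T <= wtot r S <= r * NN R T.
Proof.
move=> r1; rewrite /wtot -sum_one mulr_sumr; apply/andP; split; apply: ler_sum => x _;
  by case/andP: (@fit_ge1 _ _ _ S x r1) => ? ?; rewrite ?mulr1.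
Qed.

Lemma wnb_ge (R : realType) (T : finType) (e : rel T) (r : R) (S : {set T}) x : 1 < r ->
  deg R e x <= wnb e r S x <= r * deg R e x.
Proof.
move=> r1; rewrite /wnb /deg -[#|_|%:R]mulr1n -sumr_const mulr_sumr; apply/andP; split; apply: ler_sum => y _;
  by case/andP: (@fit_ge1 _ _ _ S y r1) => ? ?; rewrite ?mulr1.
Qed.

Lemma psi_bound (R : realType) (T : finType) (e : rel T) (r : R) S u v :
  symmetric e -> irreflexive e -> 1 < r -> e u v ->
  (r - 1) / (r * (NN R T) ^+ 3) <= psi_half e r S u v.
Proof.
move=> esym eirr r1 euv.
have evu : e v u by rewrite esym.
have du0 := @deg_gt0 R _ _ _ _ euv. have dv0 := @deg_gt0 R _ _ _ _ evu.
have duN := @deg_leN R _ e u. have dvN := @deg_leN R _ e v.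
have N2 : 2 <= NN R T.
  have uv : u != v by apply: contraTneq euv => ->; rewrite eirr.
  rewrite /NN (ler_nat _ 2); apply: leq_trans (max_card [set u; v]); by rewrite cards2 uv.
have N0 : 0 < NN R T by lra.
case/andP: (@wtot_ge _ _ _ S r1) => w1 w2.
case/andP: (@wnb_ge _ _ e _ S v r1) => A1 A2.
case/andP: (@wnb_ge _ _ e _ S u r1) => B1 B2.
have w0 : 0 < wtot r S by lra.
have A0 : 0 < wnb e r S v by lra.
have B0 : 0 < wnb e r S u by lra.
have r0 : 0 < r by lra.
rewrite /psi_half.
set n := (NN R T)^-1.
have -> : (r - 1) / (r * NN R T ^+ 3) = r^-1 * ((r - 1) * n ^+ 3).
  by rewrite /n; field; rewrite ?mulf_neq0 ?expf_neq0 //; lra.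
rewrite ler_pdivrMl //.
rewrite -[1 / deg R e v]mul1r.
set du := deg R e u in du0 duN B1 B2 *; set dv := deg R e v in dv0 dvN A1 A2 *.
set W := wtot r S in w0 w1 w2 *; set A := wnb e r S v in A0 A1 A2 *; set B := wnb e r S u in B0 B1 B2 *.
have nN : n = 1 / NN R T by rewrite mul1r.
apply: key_ineq => //.
- by rewrite nN -(mul1r du^-1); apply: div_le_div => //; lra.
- by rewrite mul1r nN; apply: div_le_div => //; lra.
- by rewrite /n invr_gt0.
- by rewrite /n ler_pdivrMr // mul1r.
- by rewrite mulrC nN; apply: div_le_div => //; lra.
- by rewrite nN -(mul1r W^-1); apply: div_le_div => //; lra.
- by rewrite mul1r; apply: div_le_div => //; lra.
- by rewrite -(mul1r du^-1); apply: div_le_div => //; lra.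
Qed.

Set Implicit Arguments. Unset Strict Implicit.

Lemma sum_ind (R : realType) (T : finType) (g : {set T} -> R) (c : R) (X : {set T}) :
  \sum_(S' : {set T}) c * (X == S')%:R * g S' = c * g X.
Proof.
rewrite (bigD1 X) //= eqxx mulr1 big1 ?addr0 // => S' /negbTE.
by rewrite eq_sym => ->; rewrite mulr0 mul0r.
Qed.

Lemma sum_ind2 (R : realType) (T : finType) (g : {set T} -> R) (P : T -> {set T})
   (F : T -> T -> R) (h : T -> T -> {set T}) :
  \sum_(S' : {set T}) (\sum_(a : T) \sum_(b in P a) F a b * (h a b == S')%:R) * g S'
  = \sum_(a : T) \sum_(b in P a) F a b * g (h a b).
Proof.
under eq_bigr do rewrite mulr_suml.
rewrite exchange_big /=; apply: eq_bigr => a _.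
under eq_bigr do rewrite mulr_suml.
rewrite exchange_big /=; apply: eq_bigr => b _.
exact: sum_ind.
Qed.

Lemma trans_exp (R : realType) (T : finType) (e : rel T) (d r : R) (S : {set T})
  (g : {set T} -> R) :
  \sum_(S' : {set T}) trans e d r S S' * g S' =
  d * (\sum_(v : T) \sum_(u in nbrs e v) (NN R T)^-1 * (fit r S u / wnb e r S v) * g (upd S u v))
  + (1 - d) * (\sum_(u : T) \sum_(v in nbrs e u) fit r S u / wtot r S * (deg R e u)^-1 * g (upd S u v)).
Proof.
rewrite /trans.
under eq_bigr do rewrite mulrDl -!mulrA.
rewrite big_split /= -!mulr_sumr.
congr (_ * _ + _ * _).
  rewrite -(sum_ind2 g (fun v => nbrs e v) _ (fun v u => upd S u v)).
  by [].
rewrite -(sum_ind2 g (fun u => nbrs e u) _ (fun u v => upd S u v)).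
by [].
Qed.

Lemma wnb_gt0 (R : realType) (T : finType) (e : rel T) (r : R) (S : {set T}) x y :
  1 < r -> e x y -> 0 < wnb e r S x.
Proof.
move=> r1 exy; have := @deg_gt0 R _ _ _ _ exy.
by case/andP: (@wnb_ge _ _ e _ S x r1) => h _; lra.
Qed.

Lemma trans_sum1 (R : realType) (T : finType) (e : rel T) (d r : R) (S : {set T}) :
  (forall x, exists y, e x y) -> 1 < r -> 0 < NN R T ->
  \sum_(S' : {set T}) trans e d r S S' = 1.
Proof.
move=> hnb r1 NT.

have := trans_exp e d r S (fun _ => 1); under eq_bigr do rewrite mulr1; move=> ->.
have h1 : \sum_(v : T) \sum_(u in nbrs e v) (NN R T)^-1 * (fit r S u / wnb e r S v) * 1 = 1.
  rewrite (eq_bigr (fun _ => (NN R T)^-1 * 1)).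
    by rewrite -mulr_sumr sum_one mulVf ?gt_eqF.
  move=> v _; case: (hnb v) => y evy.
  have w0 := wnb_gt0 S r1 evy.
  under eq_bigr do rewrite mulr1 mulrA.
  by rewrite mulr1 -mulr_suml -mulr_sumr -/(wnb e r S v) mulfK ?gt_eqF.
have h2 : \sum_(u : T) \sum_(v in nbrs e u) fit r S u / wtot r S * (deg R e u)^-1 * 1 = 1.
  have W0 : 0 < wtot r S.
    by case/andP: (@wtot_ge _ _ _ S r1) => h _; lra.
  rewrite (eq_bigr (fun u => fit r S u / wtot r S)).
    by rewrite -mulr_suml mulfV ?gt_eqF.
  move=> u _; case: (hnb u) => y euy; have d0 := @deg_gt0 R _ _ _ _ euy.
  rewrite sumr_const -mulr_natr -/(deg R e u) mulr1 -mulrA mulVf ?mulr1 ?gt_eqF //.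
by rewrite h1 h2; ring.
Qed.

Lemma sum_nbrs (R : realType) (T : finType) (e : rel T) (v : T) (F : T -> R) :
  \sum_(u in nbrs e v) F u = \sum_(u : T) (e v u)%:R * F u.
Proof.
rewrite big_mkcond /=; apply: eq_bigr => u _; rewrite inE.
by case: (e v u); rewrite ?mul1r ?mul0r.
Qed.

Lemma antisym_sum (R : realType) (T : finType) (X p : T -> T -> R) :
  \sum_(u : T) \sum_(v : T) X u v * (p u v - p v u) =
  \sum_(u : T) \sum_(v : T) (X u v - X v u) * p u v.
Proof.
under eq_bigr do under eq_bigr do rewrite mulrBr.
under [RHS]eq_bigr do under eq_bigr do rewrite mulrBl.
under eq_bigr do rewrite sumrB.
under [RHS]eq_bigr do rewrite sumrB.
rewrite !sumrB; congr (_ - _).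
by rewrite exchange_big.
Qed.

Lemma card_upd (R : realType) (T : finType) (S : {set T}) u v :
  (#|upd S u v|%:R - #|S|%:R : R) =
  ((u \in S) && (v \notin S))%:R - ((v \in S) && (u \notin S))%:R.
Proof.
rewrite /upd; case: ifP => uS /=.
  rewrite cardsU1 natrD addrK; case: (v \in S) => /=; ring.
by rewrite [in #|S|](cardsD1 v) natrD; case: (v \in S) => /=; rewrite ?subr0; ring.
Qed.

Lemma drift_eq (R : realType) (T : finType) (e : rel T) (r : R) (S : {set T}) :
  symmetric e -> (forall x, exists y, e x y) -> 1 < r -> 0 < NN R T ->
  \sum_(S' : {set T}) trans e 2^-1 r S S' * #|S'|%:R =
  #|S|%:R + \sum_(u : T) \sum_(v : T)
     ((e u v) && (u \in S) && (v \notin S))%:R * psi_half e r S u v.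
Proof.
move=> esym hnb r1 NT.
set d : R := 2^-1.
have rs := trans_sum1 d S hnb r1 NT.
have E := trans_exp e d r S (fun S' => #|S'|%:R).
have E1 := trans_exp e d r S (fun _ => #|S|%:R).
rewrite -mulr_suml rs mul1r in E1.
pose a := fun v u => (NN R T)^-1 * (fit r S u / wnb e r S v).
pose b := fun u (v : T) => fit r S u / wtot r S * (deg R e u)^-1.
pose h := fun u v => (#|upd S u v|%:R - #|S|%:R : R).
have step1 : \sum_(S' : {set T}) trans e d r S S' * #|S'|%:R =
  #|S|%:R + (d * \sum_(v : T) \sum_(u in nbrs e v) a v u * h u v
   + (1 - d) * \sum_(u : T) \sum_(v in nbrs e u) b u v * h u v).
  have -> : \sum_(v : T) \sum_(u in nbrs e v) a v u * h u v =
     \sum_(v : T) \sum_(u in nbrs e v) a v u * #|upd S u v|%:R -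
     \sum_(v : T) \sum_(u in nbrs e v) a v u * #|S|%:R.
    rewrite -sumrB; apply: eq_bigr => v _; rewrite -sumrB.
    by apply: eq_bigr => u _; rewrite mulrBr.
  have -> : \sum_(u : T) \sum_(v in nbrs e u) b u v * h u v =
     \sum_(u : T) \sum_(v in nbrs e u) b u v * #|upd S u v|%:R -
     \sum_(u : T) \sum_(v in nbrs e u) b u v * #|S|%:R.
    rewrite -sumrB; apply: eq_bigr => u _; rewrite -sumrB.
    by apply: eq_bigr => v _; rewrite mulrBr.
  rewrite E /a /b; rewrite /d in E1 *; lra.
rewrite step1.
have -> : \sum_(v : T) \sum_(u in nbrs e v) a v u * h u v =
   \sum_(u : T) \sum_(v : T) (e u v)%:R * a v u * h u v.
  under eq_bigr do rewrite sum_nbrs.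
  rewrite exchange_big; apply: eq_bigr => u _; apply: eq_bigr => v _.
  by rewrite (esym v u) mulrA.
have -> : \sum_(u : T) \sum_(v in nbrs e u) b u v * h u v =
   \sum_(u : T) \sum_(v : T) (e u v)%:R * b u v * h u v.
  under eq_bigr do rewrite sum_nbrs.
  by apply: eq_bigr => u _; apply: eq_bigr => v _; rewrite mulrA.
pose X := fun u v => (e u v)%:R * (d * a v u + (1 - d) * b u v).
pose p := fun u v => ((u \in S) && (v \notin S))%:R : R.
have -> : d * \sum_(u : T) \sum_(v : T) (e u v)%:R * a v u * h u v +
   (1 - d) * \sum_(u : T) \sum_(v : T) (e u v)%:R * b u v * h u v =
   \sum_(u : T) \sum_(v : T) X u v * (p u v - p v u).
  rewrite !mulr_sumr -big_split; apply: eq_bigr => u _.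
  rewrite !mulr_sumr -big_split; apply: eq_bigr => v _ /=.
  rewrite /p /h card_upd /X; ring.
rewrite (antisym_sum X p); congr (_ + _).
apply: eq_bigr => u _; apply: eq_bigr => v _.
rewrite /X /p /a /b (esym v u).
case uS: (u \in S); case vS: (v \in S); case euv: (e u v) => /=;
  rewrite ?mulr0 ?mul0r ?subr0 ?mulr1 ?mul1r //.
rewrite /psi_half /fit uS vS /d.
set A := wnb e r S v. set B := wnb e r S u. set W := wtot r S. set du := deg R e u. set dv := deg R e v. set N := NN R T. rewrite !mulrA. have evu : e v u by rewrite esym.
have A0 : 0 < A := wnb_gt0 S r1 evu.
have B0 : 0 < B := wnb_gt0 S r1 euv.
have du0 : 0 < du := @deg_gt0 R _ _ _ _ euv.
have dv0 : 0 < dv := @deg_gt0 R _ _ _ _ evu.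
have W0 : 0 < W by case/andP: (@wtot_ge _ _ _ S r1) => h1 _; rewrite /W; lra.
field.
by rewrite !lt0r_neq0.
Qed.

Lemma sum_ge_term (R : realType) (I : finType) (F : I -> R) i0 :
  (forall i, 0 <= F i) -> F i0 <= \sum_(i : I) F i.
Proof. by move=> h; rewrite (bigD1 i0) //= lerDl sumr_ge0. Qed.

Lemma drift_ge (R : realType) (T : finType) (e : rel T) (r : R) (S : {set T}) :
  symmetric e -> irreflexive e -> (forall x y, connect e x y) ->
  (forall x, exists y, e x y) -> 1 < r -> 0 < NN R T ->
  #|S|%:R + (r - 1) / (r * (NN R T) ^+ 3) * (~~ absorbed S)%:R <=
  \sum_(S' : {set T}) trans e 2^-1 r S S' * #|S'|%:R.
Proof.
move=> esym eirr conn hnb r1 NT.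
rewrite drift_eq // lerD2l.
have c0 : 0 < (r - 1) / (r * (NN R T) ^+ 3).
  by rewrite divr_gt0 ?mulr_gt0 ?exprn_gt0 //; lra.
have tge0 : forall u v, 0 <= ((e u v) && (u \in S) && (v \notin S))%:R * psi_half e r S u v.
  move=> u v; case: (boolP ((e u v) && (u \in S) && (v \notin S))) => [/andP[/andP[euv _] _]|_];
    last by rewrite mul0r.
  rewrite mul1r; apply: le_trans (@psi_bound _ _ _ _ S _ _ esym eirr r1 euv); exact: ltW.
rewrite /absorbed; case: (boolP (S == finset.set0)) => [_|S0] /=.
  by rewrite mulr0; apply: sumr_ge0 => u _; apply: sumr_ge0 => v _.
case: (boolP (S == [set: T])) => [_|ST] /=.
  by rewrite mulr0; apply: sumr_ge0 => u _; apply: sumr_ge0 => v _.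
rewrite mulr1.
have [u [v [euv uS vS]]] := @boundary_edge _ _ S conn S0 ST.
apply: le_trans (sum_ge_term u _) => [|u' ]; last by apply: sumr_ge0 => v' _.
apply: le_trans (sum_ge_term v _) => [|v' ]; last by [].
by rewrite euv uS vS mul1r (@psi_bound _ _ _ _ S _ _ esym eirr r1 euv).
Qed.

Lemma series_le (R : realType) (u : nat -> R) (B : R) :
  (forall n, 0 <= u n) -> (forall k, \sum_(0 <= i < k) u i <= B) ->
  (\sum_(0 <= t <oo) (u t)%:E <= B%:E)%E.
Proof.
move=> u0 hB.
apply: (lime_le (is_cvg_nneseries _)).
  by move=> n _ _; rewrite lee_fin.
apply: nearW => k /=.
by rewrite sumEFin lee_fin.
Qed.

Lemma trans_ge0 (R : realType) (T : finType) (e : rel T) (r : R) (S S' : {set T}) :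
  1 < r -> 0 <= trans e 2^-1 r S S'.
Proof.
move=> r1.
have f0 : forall x, 0 <= fit r S x by move=> x; case/andP: (@fit_ge1 _ _ _ S x r1) => h _; lra.
rewrite /trans; apply: addr_ge0; apply: mulr_ge0; try lra;
  apply: sumr_ge0 => ? _; apply: sumr_ge0 => ? _;
  by rewrite ?mulr_ge0 ?invr_ge0 ?ler0n ?f0 ?sumr_ge0.
Qed.

Lemma distr_ge0 (R : realType) (T : finType) (e : rel T) (r : R) t (S0 S : {set T}) :
  1 < r -> 0 <= distr e 2^-1 r t S0 S.
Proof.
move=> r1; elim: t S => [|t IH] S /=; first exact: ler0n.
by apply: sumr_ge0 => S1 _; rewrite mulr_ge0 ?IH ?trans_ge0.
Qed.

Lemma distr_sum1 (R : realType) (T : finType) (e : rel T) (r : R) t (S0 : {set T}) :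
  (forall x, exists y, e x y) -> 1 < r -> 0 < NN R T ->
  \sum_(S : {set T}) distr e 2^-1 r t S0 S = 1.
Proof.
move=> hnb r1 NT; elim: t => [|t IH] /=.
  rewrite (bigD1 S0) //= eqxx big1 ?addr0 // => S /negbTE.
  by rewrite eq_sym => ->.
rewrite exchange_big /= -[RHS]IH.
by apply: eq_bigr => S1 _; rewrite -mulr_sumr (trans_sum1 _ S1 hnb r1 NT) mulr1.
Qed.

Definition mean (R : realType) (T : finType) (e : rel T) (r : R) (S0 : {set T}) t : R :=
  \sum_(S : {set T}) distr e 2^-1 r t S0 S * #|S|%:R.

Lemma mean_step (R : realType) (T : finType) (e : rel T) (r : R) (S0 : {set T}) t :
  symmetric e -> irreflexive e -> (forall x y, connect e x y) ->
  (forall x, exists y, e x y) -> 1 < r -> 0 < NN R T ->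
  mean e r S0 t + (r - 1) / (r * (NN R T) ^+ 3) * surv e 2^-1 r S0 t <= mean e r S0 t.+1.
Proof.
move=> esym eirr conn hnb r1 NT.
set c := (r - 1) / (r * (NN R T) ^+ 3).
have -> : mean e r S0 t.+1 = \sum_(S1 : {set T}) distr e 2^-1 r t S0 S1 *
     \sum_(S : {set T}) trans e 2^-1 r S1 S * #|S|%:R.
  rewrite /mean /=; under eq_bigr do rewrite mulr_suml.
  rewrite exchange_big; apply: eq_bigr => S1 _; rewrite mulr_sumr.
  by apply: eq_bigr => S _; rewrite mulrA.
have -> : surv e 2^-1 r S0 t = \sum_(S : {set T}) distr e 2^-1 r t S0 S * (~~ absorbed S)%:R.
  rewrite /surv big_mkcond; apply: eq_bigr => S _.
  by case: ifP => _; rewrite ?mulr1 ?mulr0.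
rewrite /mean mulr_sumr -big_split /=.
apply: ler_sum => S1 _.
have := drift_ge S1 esym eirr conn hnb r1 NT; rewrite -/c => h.
have := @distr_ge0 R T e r t S0 S1 r1 => d0.
by rewrite mulrCA -mulrDr ler_wpM2l.
Qed.

Lemma mean_le (R : realType) (T : finType) (e : rel T) (r : R) (S0 : {set T}) t :
  (forall x, exists y, e x y) -> 1 < r -> 0 < NN R T ->
  0 <= mean e r S0 t <= NN R T.
Proof.
move=> hnb r1 NT; apply/andP; split.
  by apply: sumr_ge0 => S _; rewrite mulr_ge0 ?distr_ge0 ?ler0n.
rewrite -[X in _ <= X]mul1r -(distr_sum1 t S0 hnb r1 NT) mulr_suml.
apply: ler_sum => S _; rewrite ler_wpM2l ?distr_ge0 //.
by rewrite /NN ler_nat max_card.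
Qed.

Lemma surv_sum_le (R : realType) (T : finType) (e : rel T) (r : R) (S0 : {set T}) k :
  symmetric e -> irreflexive e -> (forall x y, connect e x y) ->
  (forall x, exists y, e x y) -> 1 < r -> 0 < NN R T ->
  (r - 1) / (r * (NN R T) ^+ 3) * \sum_(0 <= i < k) surv e 2^-1 r S0 i <= NN R T.
Proof.
move=> esym eirr conn hnb r1 NT.
set c := (r - 1) / (r * (NN R T) ^+ 3).
suff H : mean e r S0 0 + c * \sum_(0 <= i < k) surv e 2^-1 r S0 i <= mean e r S0 k.
  case/andP: (mean_le S0 0 hnb r1 NT) => h0 _.
  case/andP: (mean_le S0 k hnb r1 NT) => _ hk.
  lra.
elim: k => [|k IH]; first by rewrite big_geq // mulr0 addr0.
rewrite big_nat_recr //= mulrDr addrA.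
apply: le_trans (mean_step S0 k esym eirr conn hnb r1 NT).
by rewrite lerD2r.
Qed.

Unset Implicit Arguments. Set Strict Implicit.

Theorem mainTheorem12 (R : realType) (T : finType) (e : rel T) (r : R) :
  simple_connected_graph e -> 1 < r ->
  (forall (S : {set T}) (u v : T),
      S != finset.set0 -> S != [set: T] -> e u v -> u \in S -> v \notin S ->
      psi_half e r S u v >= (r - 1) / (r * (NN R T) ^+ 3))
  /\
  (forall S0 : {set T},
      (AT e (2^-1) r S0 <= (r / (r - 1) * (NN R T) ^+ 4)%:E)%E).
Proof.
move=> [esym [eirr conn]] r1; split.
  by move=> S u v _ _ euv _ _; exact: (@psi_bound _ _ _ _ S _ _ esym eirr r1 euv).
move=> S0; rewrite /AT; apply: series_le.
  move=> n; rewrite /surv; apply: sumr_ge0 => S _; exact: distr_ge0.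
move=> k.
have B0 : 0 <= r / (r - 1) * NN R T ^+ 4.
  by rewrite mulr_ge0 ?exprn_ge0 ?ler0n ?divr_ge0 //; lra.
case: (leqP #|T| 1) => [/fintype_le1P T1|T2].
  rewrite big1 // => i _; rewrite /surv big_pred0 // => S.
  apply/negbF; rewrite /absorbed.
  case: (set_0Vmem S) => [->|[x xS]]; first by rewrite eqxx.
  apply/orP; right; apply/eqP/setP => y; rewrite inE.
  by rewrite (T1 x y).
have [x0 [y0 [_ _ xy]]] := card_gt1P T2.
have NT : 0 < NN R T by rewrite /NN ltr0n; apply: leq_trans T2.
have hnb : forall x, exists y, e x y.
  move=> x.
  have [y yx] : exists y, y != x.
    case: (eqVneq x x0) => [->|hx]; first by exists y0; rewrite eq_sym.
    by exists x0; rewrite eq_sym.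
  have n0 : [set x] != finset.set0 by apply/set0Pn; exists x; rewrite inE.
  have nT : [set x] != [set: T].
    by apply/eqP => /setP /(_ y); rewrite !inE (negbTE yx).
  have [u [v [euv]]] := @boundary_edge _ _ _ conn n0 nT.
  by rewrite inE => /eqP ux _; exists v; rewrite -ux.
have := surv_sum_le S0 k esym eirr conn hnb r1 NT.
have c0 : 0 < (r - 1) / (r * (NN R T) ^+ 3).
  by rewrite divr_gt0 ?mulr_gt0 ?exprn_gt0 //; lra.
have -> : r / (r - 1) * NN R T ^+ 4 = ((r - 1) / (r * (NN R T) ^+ 3))^-1 * NN R T.
  by field; rewrite ?mulf_neq0 ?expf_neq0 ?gt_eqF //; lra.
by rewrite ler_pdivlMl.
Qed.
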